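(* Let $H$ be a separable real Hilbert space with complete orthonormal system $(e_k)_{k\ge1}$, $F\subset H$ compact, and $\mu$ a probability measure on $F$. Then for every $h\in F$, \[\lim_{\min(d,n)\to\infty}\Lambda^\mu_{d,n}(h)=\mu(\{h\}).\]
   Context: $c_0(\mathbb{N})$ is the set of sequences of nonnegative integers with finitely many nonzero entries; for $a\in c_0(\mathbb{N})$, $f^a:=\prod_k\langle f,e_k\rangle^{a_k}$. A polynomial on $H$ is a finite linear combination $p(f)=\sum_a p_a f^a$; its algebraic degree is $\max\{\sum_k a_k: p_a\neq0\}$ and its harmonic degree is $\max\{k: a_k\neq0\text{ for some } a\text{ with } p_a\neq0\}$. $P_{d,n}$ is the space of polynomials of algebraic degree at most $d$ and harmonic degree at most $n$. The Christoffel function is $\Lambda^\mu_{d,n}(h)=\min\{\int_F p(f)^2\,d\mu(f): p\in P_{d,n},\ p(h)=1\}$ for $h\in H$. *)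

(* Defs.v *)
From HB Require Import structures.
From mathcomp Require Import all_boot all_order all_algebra.
From mathcomp Require Import all_classical all_reals all_analysis.
Set Implicit Arguments. Unset Strict Implicit. Unset Printing Implicit Defensive.
Import Order.TTheory GRing.Theory Num.Theory.
Import numFieldNormedType.Exports.
Local Open Scope classical_set_scope.
Local Open Scope ring_scope.

Definition borelType (H : topologicalType) := g_sigma_algebraType (@open H).

Definition is_inner_product (R : realType) (H : normedModType R)
  (ip : H -> H -> R) : Prop :=
  [/\ (forall x y, ip x y = ip y x),
      (forall (a : R) (x y z : H), ip (a *: x + y) z = a * ip x z + ip y z) &
      (forall x, ip x x = `|x| ^+ 2)].

(* (e k)_{k : nat} is a complete orthonormal system; e k stands for e_{k+1}. *)
Definition complete_orthonormal (R : realType) (H : normedModType R)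
  (ip : H -> H -> R) (e : nat -> H) : Prop :=
  (forall i j, ip (e i) (e j) = (i == j)%:R) /\
  (forall f, (forall k, ip f (e k) = 0) -> f = 0).

(* P_{d,n}: polynomials p(f) = sum_a p_a f^a, with f^a = prod_k <f,e_k>^(a_k),
   whose nonzero coefficients p_a have a supported on {e_1,...,e_n}
   (harmonic degree <= n) and sum_k a_k <= d (algebraic degree <= d).
   A multi-index supported on the first n coordinates with total degree <= d
   is encoded as a : 'I_n -> 'I_d.+1 (each a_k <= d automatically). *)
Definition Pdn (R : realType) (H : Type) (ip : H -> H -> R) (e : nat -> H)
  (d n : nat) : set (H -> R) :=
  [set p | exists c : {ffun {ffun 'I_n -> 'I_d.+1} -> R},
     (forall a, c a != 0 -> (\sum_(i < n) (a i : nat) <= d)%N) /\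
     (forall f, p f = \sum_a c a * \prod_(i < n) (ip f (e i)) ^+ (a i))].

(* Christoffel function Lambda^mu_{d,n}(h) = min { int_F p^2 dmu : p in P_{d,n}, p(h)=1 }
   (the minimum is attained, so it equals the infimum used here). *)
Definition christoffel (R : realType) (H : normedModType R)
  (ip : H -> H -> R) (e : nat -> H)
  (mu : {measure set (borelType H) -> \bar R}) (F : set H)
  (d n : nat) (h : H) : \bar R :=
  ereal_inf [set (\int[mu]_(x in (F : set (borelType H))) ((p x) ^+ 2)%:E)%E
            | p in [set p | Pdn ip e d n p /\ p h = 1]].

(* Main.v *)
Require Import Defs.
From HB Require Import structures.
From mathcomp Require Import all_boot all_order all_algebra.
From mathcomp Require Import all_classical all_reals all_analysis.
Import Order.TTheory GRing.Theory Num.Theory.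
Import numFieldNormedType.Exports.
Local Open Scope classical_set_scope.
Local Open Scope ring_scope.
From mathcomp Require Import ring lra.
From mathcomp Require Import measurable_realfun.

Section Poly.
Variables (R : realType) (H : Type) (ip : H -> H -> R) (e : nat -> H).

Definition mon n (a : {ffun 'I_n -> nat}) (f : H) : R :=
  \prod_(i < n) (ip f (e i)) ^+ a i.

Arguments mon {n}.
Definition Q d n (p : H -> R) := exists s : seq ({ffun 'I_n -> nat} * R),
  (forall x, x \in s -> ((\sum_(i < n) x.1 i)%N <= d)%N) /\
  (forall f, p f = \sum_(x <- s) x.2 * mon x.1 f).

Lemma Q_Pdn d n p : Q d n p -> Pdn ip e d n p.
Proof.
case=> s [sd pE].
pose g (a : {ffun 'I_n -> 'I_d.+1}) : {ffun 'I_n -> nat} := [ffun i => (a i : nat)].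
exists [ffun a => \sum_(x <- s | x.1 == g a) x.2]; split.
  move=> a; rewrite ffunE => Hc.
  have : has (fun x => x.1 == g a) s.
    apply: contraNT Hc => /hasPn Hn; rewrite big1_seq //.
    by move=> x /andP[Hx xs]; move: (Hn x xs); rewrite Hx.
  case/hasP=> x xs /eqP xE; move: (sd x xs); rewrite xE.
  by under eq_bigr do rewrite /g ffunE.
move=> f; rewrite pE; symmetry.
under eq_bigr => a _ do rewrite ffunE big_mkcond mulr_suml.
rewrite exchange_big /=; apply: eq_big_seq => x xs.
have xd : forall i, (x.1 i < d.+1)%N.
  move=> i; rewrite ltnS; apply: leq_trans (sd x xs).
  by rewrite (bigD1 i) //= leq_addr.
pose a0 : {ffun 'I_n -> 'I_d.+1} := [ffun i => inord (x.1 i)].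
have ga0 : g a0 = x.1 by apply/ffunP => i; rewrite !ffunE inordK.
rewrite (bigD1 a0) //= ga0 eqxx [X in _ + X]big1 ?addr0.
  congr (_ * _); apply: eq_bigr => i _.
  by rewrite ffunE inordK.
move=> a aa0; case: eqP => [xa|]; last by rewrite mul0r.
case/eqP: aa0; apply/ffunP => i; rewrite ffunE; apply/val_inj => /=.
by rewrite xa ffunE inordK.
Qed.

Lemma Q_mono d d' n p : (d <= d')%N -> Q d n p -> Q d' n p.
Proof. by move=> dd' [s [sd pE]]; exists s; split=> // x xs; apply: leq_trans (sd x xs) dd'. Qed.

Lemma Q_ext d n p q : (forall f, p f = q f) -> Q d n p -> Q d n q.
Proof. by move=> pq [s [sd pE]]; exists s; split=> // f; rewrite -pq. Qed.

Lemma Q_const d n c : Q d n (fun _ => c).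
Proof.
exists [:: ([ffun => 0%N], c)]; split.
  by move=> x; rewrite inE => /eqP -> /=; rewrite big1 // => i _; rewrite ffunE.
move=> f; rewrite big_seq1 /= /mon big1 ?mulr1 // => i _.
by rewrite ffunE expr0.
Qed.

Lemma Q_coord n (i : 'I_n) : Q 1 n (fun f => ip f (e i)).
Proof.
exists [:: ([ffun j => (j == i) : nat], 1)]; split.
  move=> x; rewrite inE => /eqP -> /=; rewrite (bigD1 i) //= big1 ?ffunE ?eqxx //.
  by move=> j /negPf ji; rewrite ffunE ji.
move=> f; rewrite big_seq1 /= /mon (bigD1 i) //= big1 ?mul1r ?mulr1 ?ffunE ?eqxx //.
by move=> j /negPf ji; rewrite ffunE ji.
Qed.

Lemma Q_add d n p q : Q d n p -> Q d n q -> Q d n (fun f => p f + q f).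
Proof.
move=> [s [sd pE]] [t [td qE]]; exists (s ++ t); split.
  by move=> x; rewrite mem_cat => /orP[/sd|/td].
by move=> f; rewrite big_cat pE qE.
Qed.

Lemma monD n (a b : {ffun 'I_n -> nat}) f :
  mon [ffun i => (a i + b i)%N] f = mon a f * mon b f.
Proof. by rewrite /mon -big_split; apply: eq_bigr => i _; rewrite ffunE exprD. Qed.

Lemma Q_mul d1 d2 n p q : Q d1 n p -> Q d2 n q -> Q (d1 + d2) n (fun f => p f * q f).
Proof.
move=> [s [sd pE]] [t [td qE]].
exists [seq ([ffun i => (x.1 i + y.1 i)%N], x.2 * y.2) | x : {ffun 'I_n -> nat} * R <- s, y : {ffun 'I_n -> nat} * R <- t]; split.
  move=> z /allpairsPdep [x [y [xs yt ->]]] /=.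
  under eq_bigr do rewrite ffunE.
  by rewrite big_split /= leq_add // ?sd ?td.
move=> f; rewrite big_allpairs_dep /= pE qE big_distrl /=.
apply: eq_bigr => x _; rewrite big_distrr /=; apply: eq_bigr => y _.
by rewrite monD; ring.
Qed.

Lemma Q_pow d n p m : Q d n p -> Q (d * m) n (fun f => p f ^+ m).
Proof.
move=> Hp; elim: m => [|m IH].
  by apply: (@Q_ext _ _ (fun _ => 1)) => [f|]; [rewrite expr0|apply: Q_const].
rewrite mulnS; apply: (@Q_ext _ _ (fun f => p f * p f ^+ m)) => [f|].
  by rewrite exprS.
exact: Q_mul.
Qed.
End Poly.
Arguments Q {R H} ip e d n p.
Arguments Q_mono {R H ip e d d' n p}.
Arguments Q_ext {R H ip e d n} p q.
Arguments Q_const {R H ip e} d n c.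
Arguments Q_coord {R H ip e n} i.
Arguments Q_add {R H ip e d n p q}.
Arguments Q_mul {R H ip e d1 d2 n p q}.
Arguments Q_pow {R H ip e d n p} m.
Arguments Q_Pdn {R H ip e d n p}.

Section IP.
Variables (R : realType) (H : normedModType R) (ip : H -> H -> R).
Hypothesis Hip : is_inner_product ip.

Lemma ipC x y : ip x y = ip y x.
Proof. by case: Hip. Qed.
Lemma ipDl x y z : ip (x + y) z = ip x z + ip y z.
Proof. by case: Hip => _ L _; rewrite -{1}(scale1r x) L mul1r. Qed.
Lemma ip0l z : ip 0 z = 0.
Proof.
have h := ipDl 0 0 z; rewrite addr0 in h.
by apply: (addIr (ip 0 z)); rewrite add0r -h.
Qed.
Lemma ipZl a x z : ip (a *: x) z = a * ip x z.
Proof. by case: Hip => _ L _; rewrite -[a *: x]addr0 L ip0l addr0. Qed.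
Lemma ipNl x z : ip (- x) z = - ip x z.
Proof. by rewrite -scaleN1r ipZl mulN1r. Qed.
Lemma ipBl x y z : ip (x - y) z = ip x z - ip y z.
Proof. by rewrite ipDl ipNl. Qed.
Lemma ipxx x : ip x x = `|x| ^+ 2.
Proof. by case: Hip. Qed.

Lemma ip_expand u w x y :
  ip (u *: x + w *: y) (u *: x + w *: y) =
  u ^+ 2 * ip x x + 2 * u * w * ip x y + w ^+ 2 * ip y y.
Proof.
rewrite !ipDl !(ipC (u *: x)) !(ipC (w *: y)) !ipDl !ipZl.
rewrite !(ipC _ (u *: x)) !(ipC _ (w *: y)) !ipZl (ipC y x); ring.
Qed.

Lemma ip_CS x y : `|ip x y| <= `|x| * `|y|.
Proof.
set a := `|x|; set b := `|y|.
have h1 := ip_expand b (- a) x y; have h2 := ip_expand b a x y.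
rewrite !ipxx in h1 h2.
have n1 : 0 <= `|b *: x + - a *: y| ^+ 2 by apply: sqr_ge0.
have n2 : 0 <= `|b *: x + a *: y| ^+ 2 by apply: sqr_ge0.
rewrite h1 -/a -/b in n1; rewrite h2 -/a -/b in n2.
have a0 : 0 <= a by apply: normr_ge0.
have b0 : 0 <= b by apply: normr_ge0.
have [ab0|abp] := eqVneq (a * b) 0.
  move/eqP: ab0; rewrite mulf_eq0 => /orP[|] /eqP; rewrite /a /b => /normr0_eq0 ->.
    by rewrite ip0l normr0 normr0 mul0r.
  by rewrite ipC ip0l normr0 normr0 mulr0.
have abg : 0 < a * b by rewrite lt_def abp mulr_ge0.
rewrite ler_norml; apply/andP; split.
  rewrite -(ler_pM2l abg); nra.
rewrite -(ler_pM2l abg); nra.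
Qed.
End IP.

Section Cont.
Variables (R : realType) (H : normedModType R).

Lemma contD (f g : H -> R) : continuous f -> continuous g -> continuous (fun x => f x + g x).
Proof. by move=> cf cg x; apply: cvgD; [exact: cf|exact: cg]. Qed.
Lemma contM (f g : H -> R) : continuous f -> continuous g -> continuous (fun x => f x * g x).
Proof. by move=> cf cg x; apply: cvgM; [exact: cf|exact: cg]. Qed.
Lemma contC (c : R) : continuous (fun _ : H => c).
Proof. by move=> x; apply: cvg_cst. Qed.
Lemma cont_sum (I : Type) (r : seq I) (F : I -> H -> R) :
  (forall i, continuous (F i)) -> continuous (fun x => \sum_(i <- r) F i x).
Proof.
move=> cF; elim: r => [|i r IH].
  by under eq_fun do rewrite big_nil; exact: contC.
by under eq_fun do rewrite big_cons; exact: contD.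
Qed.
Lemma cont_prod (I : Type) (r : seq I) (F : I -> H -> R) :
  (forall i, continuous (F i)) -> continuous (fun x => \prod_(i <- r) F i x).
Proof.
move=> cF; elim: r => [|i r IH].
  by under eq_fun do rewrite big_nil; exact: contC.
by under eq_fun do rewrite big_cons; exact: contM.
Qed.
Lemma cont_exp (f : H -> R) m : continuous f -> continuous (fun x => f x ^+ m).
Proof.
move=> cf; elim: m => [|m IH].
  by under eq_fun do rewrite expr0; exact: contC.
by under eq_fun do rewrite exprS; exact: contM.
Qed.

Variable ip : H -> H -> R.
Hypothesis Hip : is_inner_product ip.

Lemma cont_ip v : continuous (fun f => ip f v).
Proof.
move=> x; apply/cvgrPdist_lt => eps e0.
have c0 : 0 < `|v| + 1 by rewrite ltr_wpDl.
have d0 : 0 < eps / (`|v| + 1) by rewrite divr_gt0.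
near=> t.
have xt : `|x - t| < eps / (`|v| + 1).
  by near: t; exact: (@cvgr_dist_lt _ _ _ (nbhs x) _ (fun t => t) x (@cvg_id _ (nbhs x)) _ d0).
rewrite -(@ipBl _ _ _ Hip); apply: le_lt_trans (@ip_CS _ _ _ Hip _ _) _.
move: xt; rewrite ltr_pdivlMr //.
have := normr_ge0 (x - t); have := normr_ge0 v; nra.
Unshelve. all: by end_near.
Qed.

Lemma cont_Pdn (e : nat -> H) d n p : Pdn ip e d n p -> continuous p.
Proof.
case=> c [_ pE]; rewrite (_ : p = fun f => \sum_a c a * \prod_(i < n) ip f (e i) ^+ a i).
  apply: cont_sum => a; apply: contM; first exact: contC.
  by apply: cont_prod => i; apply: cont_exp; apply: cont_ip.
by apply: funext => f; rewrite pE.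
Qed.
End Cont.

Section Meas.
Variables (R : realType) (H : normedModType R).

Lemma open_meas (A : set H) : open A -> measurable (A : set (borelType H)).
Proof. by move=> oA; apply: sub_sigma_algebra. Qed.

Lemma cont_meas (g : H -> R) : continuous g ->
  measurable_fun (setT : set (borelType H)) (g : borelType H -> R).
Proof.
move=> /continuousP cg; apply: (measurability _ (RGenOpens.measurableE R)).
move=> _ [_ [a [b ->] <-]]; rewrite setTI; apply: open_meas.
by apply: cg; exact: interval_open.
Qed.
End Meas.

Lemma cover_nat (R : realType) (H : normedModType R) (K : set H) (U : nat -> set H) :
  compact K -> (forall k, open (U k)) -> (forall j k, (j <= k)%N -> U j `<=` U k) ->
  K `<=` \bigcup_k U k -> exists N, K `<=` U N.
Proof.
move=> cK oU mU KU; move: cK; rewrite compact_cover => cK.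
have [D' _ sub] := cK nat setT U (fun k _ => oU k) (fun x Kx => let: ex_intro2 k _ Ux := KU x Kx in ex_intro2 _ _ k I Ux).
exists (\max_(i <- finmap.enum_fset D') i)%N => x /sub [i Di Ui]; apply: (mU i) => //.
exact: (@leq_bigmax_seq _ _ xpredT (fun i => i)).
Qed.

Section Main.
Variables (R : realType) (H : completeNormedModType R)
  (ip : H -> H -> R) (e : nat -> H)
  (Hip : is_inner_product ip) (He : complete_orthonormal ip e)
  (F : set H) (HF : compact F)
  (mu : probability (borelType H) R) (muF : mu (F : set (borelType H)) = 1%E)
  (h : H) (hF : F h).

Definition S k (f : H) := \sum_(i < k) (ip f (e i) - ip h (e i)) ^+ 2.

Lemma S_ge0 k f : 0 <= S k f.
Proof. by apply: sumr_ge0 => i _; apply: sqr_ge0. Qed.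

Lemma S_mono j k f : (j <= k)%N -> S j f <= S k f.
Proof.
move=> jk; rewrite /S -(subnKC jk) big_split_ord /= lerDl.
by apply: sumr_ge0 => i _; apply: sqr_ge0.
Qed.

Lemma S_h k : S k h = 0.
Proof. by rewrite /S big1 // => i _; rewrite subrr expr0n. Qed.

Lemma S_cont k : continuous (S k).
Proof.
rewrite /S; apply: cont_sum => i; apply: cont_exp; apply: contD.
  exact: cont_ip.
exact: contC.
Qed.

Lemma S_Q k n : (k <= n)%N -> Q ip e 2 n (S k).
Proof.
move=> kn; rewrite /S; elim: k kn => [|k IH] kn.
  by apply: (@Q_ext _ _ _ _ _ _ (fun _ => 0)) => [f|]; [rewrite big_ord0|exact: Q_const].
apply: (@Q_ext _ _ _ _ _ _ (fun f => \sum_(i < k) (ip f (e i) - ip h (e i)) ^+ 2 +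
   (ip f (e k) - ip h (e k)) ^+ 2)) => [f|].
  by rewrite big_ord_recr.
apply: Q_add; first exact: IH (ltnW kn).
apply: (@Q_ext _ _ _ _ _ _ (fun f => (ip f (e (Ordinal kn)) + (- ip h (e k))) ^+ 1 *
  (ip f (e (Ordinal kn)) + (- ip h (e k))) ^+ 1)) => [f|].
  by rewrite -exprD.
have LL : Q ip e 1 n (fun f => (ip f (e (Ordinal kn)) + (- ip h (e k))) ^+ 1).
  apply: (@Q_ext _ _ _ _ _ _ (fun f => ip f (e (Ordinal kn)) + (- ip h (e k)))) => [f|].
    by rewrite expr1.
  by apply: Q_add; [exact: Q_coord|exact: Q_const].
exact: (Q_mul LL LL).
Qed.

Lemma F_meas : measurable (F : set (borelType H)).
Proof.
have cF : closed F by apply: compact_closed => //; exact: norm_hausdorff.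
rewrite -(setCK F); apply: measurableC; apply: open_meas; exact: closed_openC.
Qed.

Definition A k : set H := ball h (k.+1%:R^-1).

Lemma small_zero (r : R) : 0 <= r -> (forall k : nat, r < k.+1%:R^-1) -> r = 0.
Proof.
move=> r0 Hr; apply/eqP; rewrite eq_le r0 andbT; rewrite leNgt; apply/negP => rp.
have t := truncnS_gt r^-1.
have := Hr (Num.truncn r^-1); rewrite ltNge => /negP; apply.
rewrite -[leRHS](invrK r) lef_pV2 ?posrE ?invr_gt0 ?ltr0n //; exact: ltW t.
Qed.

Lemma capA : \bigcap_k A k = [set h].
Proof.
apply/seteqP; split => x.
  move=> Hx; have Hk k : `|h - x| < k.+1%:R^-1.
    by have := Hx k I; rewrite /A -ball_normE /ball_ /=.
  have := @small_zero `|h - x| (normr_ge0 _) Hk; move/normr0_eq0/eqP; rewrite subr_eq0 => /eqP ->.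
  by [].
by move=> -> k _; apply: ballxx; rewrite invr_gt0 ltr0n.
Qed.

Lemma A_meas k : measurable (A k : set (borelType H)).
Proof. by apply: open_meas; exact: ball_open. Qed.

Lemma h_meas : measurable ([set h] : set (borelType H)).
Proof. by rewrite -capA; apply: bigcapT_measurable => k; exact: A_meas. Qed.

Lemma lower d n : (mu [set h] <= christoffel ip e mu F d n h)%E.
Proof.
apply: le_ereal_inf_tmp => _ [p [Pp ph] <-].
have mp : measurable_fun (setT : set (borelType H)) (fun x => p x ^+ 2).
  by apply: cont_meas; apply: cont_exp; exact: (@cont_Pdn _ _ _ Hip _ _ _ _ Pp).
have -> : mu [set h] = (\int[mu]_(x in ([set h] : set (borelType H))) (p x ^+ 2)%:E)%E.
  transitivity (\int[mu]_(x in ([set h] : set (borelType H))) (cst 1%E) x)%E.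
    by rewrite integral_cst ?mul1e //; exact: h_meas.
  by apply: eq_integral => x; rewrite inE => ->; rewrite ph expr1n.
apply: ge0_subset_integral; first exact: h_meas; first exact: F_meas.
- apply/measurable_EFinP; apply: measurable_funS mp => //.
- by move=> x _; rewrite lee_fin sqr_ge0.
- by move=> x ->.
Qed.

Lemma mu_ball (eps : R) : 0 < eps ->
  exists k, (mu (A k : set (borelType H)) < mu [set h] + eps%:E)%E.
Proof.
move=> e0.
have cv := @nonincreasing_cvg_mu _ _ R mu (fun k => A k : set (borelType H)) _ A_meas _ _.
have fh : mu ([set h] : set (borelType H)) \is a fin_num.
  rewrite ge0_fin_numE ?measure_ge0 //.
  by apply: le_lt_trans (probability_le1 _ h_meas) _; rewrite ltry.
move: cv; rewrite capA -(fineK fh) => cv.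
have {cv} := cv (le_lt_trans (probability_le1 _ (A_meas 0)) (ltry _)) h_meas.
have hom : {homo (fun k => A k : set (borelType H)) : n m / (n <= m)%N >-> (m <= n)%O}.
  move=> j k jk; apply/subsetPset; apply: le_ball.
  by rewrite lef_pV2 ?posrE ?ltr0n // ler_nat.
move=> /(_ hom); rewrite -[X in _ --> X](fineK fh) => /fine_cvgP [finA cvA].
move/cvgrPdist_lt: cvA => /(_ _ e0).
move=> /(filterI finA) [N _ HN].
have [fN dN] := HN N (leqnn N).
exists N; rewrite /= in fN dN; rewrite -(fineK fN) -EFinD lte_fin.
rewrite distrC in dN.
have := ler_norm (fine (mu (A N)) - fine (mu [set h])).
lra.
Qed.

Lemma pos_cover k0 : exists N1, forall x, F x -> ~ A k0 x -> N1.+1%:R^-1 < S N1 x.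
Proof.
have cK : compact (F `&` ~` A k0).
  by apply: compact_closedI => //; apply: open_closedC; exact: ball_open.
pose U j := [set x | j.+1%:R^-1 < S j x].
have oU j : open (U j).
  apply: (@open_comp _ _ (S j) [set y | j.+1%:R^-1 < y]) => [x _|].
    exact: S_cont.
  exact: open_gt.
have mU j k : (j <= k)%N -> U j `<=` U k.
  move=> jk x; rewrite /U /= => Ux; apply: le_lt_trans (lt_le_trans Ux (S_mono _ _ x jk)).
  by rewrite lef_pV2 ?posrE ?ltr0n // ler_nat.
have cov : F `&` ~` A k0 `<=` \bigcup_k U k.
  move=> x [Fx nAx].
  have xh : x != h.
    apply/eqP => xh; apply: nAx; rewrite xh; apply: ballxx.
    by rewrite invr_gt0 ltr0n.
  have [i vi] : exists i, ip x (e i) - ip h (e i) != 0.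
    apply: contrapT => nex; move/eqP: xh; apply; apply/eqP; rewrite -subr_eq0.
    apply/eqP; apply: He.2 => i; rewrite (@ipBl _ _ _ Hip); apply/eqP.
    by apply/negP => /negP ne; apply: nex; exists i.
  set v := ip x (e i) - ip h (e i) in vi.
  have v2 : 0 < v ^+ 2 by rewrite lt_def sqr_ge0 andbT sqrf_eq0.
  exists (maxn i.+1 (Num.truncn (v ^+ 2)^-1)) => //.
  rewrite /U /=.
  apply: (@lt_le_trans _ _ (v ^+ 2)); last first.
    apply: le_trans (S_mono _ _ x (leq_maxl _ _)).
    rewrite /S big_ord_recr /= lerDr; apply: sumr_ge0 => j _; exact: sqr_ge0.
  rewrite -[ltRHS](invrK (v ^+ 2)) ltf_pV2 ?posrE ?invr_gt0 ?ltr0n //.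
  apply: lt_le_trans (truncnS_gt _) _.
  by rewrite ler_nat ltnS leq_maxr.
have [N HN] := @cover_nat _ _ _ _ cK oU mU cov.
by exists N => x Fx nA; exact: HN x (conj Fx nA).
Qed.

Lemma bound_cover N : exists J : nat, forall x, F x -> S N x < J%:R.
Proof.
pose U j := [set x | S N x < j%:R].
have oU j : open (U j).
  apply: (@open_comp _ _ (S N) [set y | y < j%:R]) => [x _|].
    exact: S_cont.
  exact: open_lt.
have mU j k : (j <= k)%N -> U j `<=` U k.
  by move=> jk x; rewrite /U /= => Ux; apply: lt_le_trans Ux _; rewrite ler_nat.
have cov : F `<=` \bigcup_k U k.
  by move=> x Fx; exists (Num.truncn (S N x)).+1 => //; exact: truncnS_gt.
have [J HJ] := @cover_nat _ _ _ _ HF oU mU cov.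
by exists J => x Fx; exact: HJ x Fx.
Qed.

Lemma geo (r eps : R) : 0 <= r -> r < 1 -> 0 < eps -> exists m : nat, r ^+ m < eps.
Proof.
move=> r0 r1 e0.
have : `|r| < 1 by rewrite ger0_norm.
move=> /cvg_expr /cvgrPdist_lt /(_ _ e0) [N _ HN].
exists N; have := HN N (leqnn N); rewrite /= sub0r normrN ger0_norm //.
exact: exprn_ge0.
Qed.

Lemma upper (eps : R) : 0 < eps -> exists N0, forall d n, (N0 <= d)%N -> (N0 <= n)%N ->
  (christoffel ip e mu F d n h <= mu [set h] + eps%:E)%E.
Proof.
move=> e0; have e2 : 0 < eps / 2 by rewrite divr_gt0.
have [k0 Hk0] := @mu_ball (eps / 2) e2.
have [N1 HN1] := pos_cover k0.
have [J HJ] := bound_cover N1.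
set c : R := N1.+1%:R^-1.
set M : R := J%:R + 1.
have c0 : 0 < c by rewrite invr_gt0 ltr0n.
have c1 : c <= 1 by rewrite invr_le1 ?ler1n ?unitfE ?pnatr_eq0 // ltr0n.
have M1 : 1 <= M by rewrite /M lerDr.
have M0 : 0 < M by apply: lt_le_trans M1.
set rho : R := 1 - c / M.
have cM0 : 0 < c / M by rewrite divr_gt0.
have cM1 : c / M <= 1 by rewrite ler_pdivrMr // mul1r (le_trans c1 M1).
have rho0 : 0 <= rho by rewrite subr_ge0.
have rho1 : rho < 1 by rewrite ltrBlDr ltrDl.
have [m Hm] := @geo rho (eps / 2) rho0 rho1 e2.
exists (maxn (2 * m) N1) => d n dN nN.
pose q x := 1 - S N1 x / M.
pose p x := q x ^+ m.
have Qq : Q ip e 2 n q.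
  apply: (Q_ext (fun x => 1 + (- M^-1) * S N1 x)) => [x|].
    by rewrite /q mulNr mulrC.
  apply: Q_add; first exact: Q_const.
  exact: (Q_mul (Q_const 0 n (- M^-1)) (S_Q N1 n (leq_trans (leq_maxr _ _) nN))).
have Pp : Pdn ip e d n p.
  apply: Q_Pdn; apply: Q_mono (Q_pow m Qq).
  exact: leq_trans (leq_maxl _ _) dN.
have ph : p h = 1 by rewrite /p /q S_h mul0r subr0 expr1n.
have q01 x : F x -> 0 <= q x <= 1.
  move=> Fx; have := HJ x Fx; have := S_ge0 N1 x => s0 sJ.
  rewrite /q subr_ge0 lerBlDr lerDl divr_ge0 ?(ltW M0) // andbT.
  rewrite ler_pdivrMr // mul1r; apply: ltW; apply: lt_le_trans sJ _.
  by rewrite /M; lra.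
have p01 x : F x -> 0 <= p x <= 1.
  move=> /q01 /andP[q0 q1]; rewrite /p exprn_ge0 //=; exact: exprn_ile1.
have bnd x : F x -> p x ^+ 2 <= (\1_(A k0) x) + eps / 2.
  move=> Fx; have /andP[p0 p1] := p01 x Fx.
  have pp : p x ^+ 2 <= p x by rewrite expr2 ler_piMl.
  have [Ax|nAx] := pselect (A k0 x).
    rewrite indicE mem_set // ; apply: le_trans (ler_piMl p0 p1) _.
    have := ltW e2; rewrite /=; lra.
  rewrite indicE memNset // add0r; apply: le_trans pp _.
  apply: le_trans (ltW Hm); rewrite /p; apply: lerXn2r.
  - by have /andP[] := q01 x Fx.
  - exact: rho0.
  rewrite /q /rho lerD2l lerN2 ler_pM2r ?invr_gt0 //; exact: ltW (HN1 x Fx nAx).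
have mp : measurable_fun (setT : set (borelType H)) (fun x => p x ^+ 2).
  by apply: cont_meas; apply: cont_exp; exact: (@cont_Pdn _ _ _ Hip _ _ _ _ Pp).
apply: (@le_trans _ _ (\int[mu]_(x in (F : set (borelType H))) ((p x) ^+ 2)%:E)%E).
  by apply: ereal_inf_lbound; exists p.
apply: (@le_trans _ _ (\int[mu]_(x in (F : set (borelType H)))
   ((\1_(A k0 : set (borelType H)) x)%:E + (eps/2)%:E))%E).
  apply: ge0_le_integral.
  - exact: F_meas.
  - by move=> x _; rewrite lee_fin sqr_ge0.
  - apply/measurable_EFinP; apply: measurable_funS mp => //.
  - under eq_fun do rewrite -EFinD.
    apply/measurable_EFinP; apply: measurable_funD.
      by apply: measurable_indic; exact: A_meas.
    exact: measurable_cst.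
  - by move=> x Fx; rewrite -EFinD lee_fin; exact: bnd.
rewrite ge0_integralD; first last.
- exact: measurable_cst.
- by move=> x _; rewrite lee_fin ltW.
- apply/measurable_EFinP; apply: measurable_indic; exact: A_meas.
- by move=> x _; rewrite lee_fin.
- exact: F_meas.
rewrite integral_indic; last exact: A_meas.
rewrite integral_cst; last exact: F_meas.
apply: (@le_trans _ _ (mu (A k0 : set (borelType H)) + (eps/2)%:E)%E).
  apply: leeD; first exact: (@measureIl _ _ _ mu _ _ (A_meas k0) F_meas).
  rewrite -[leRHS]mule1 lee_pmul2l ?lte_fin //.
  exact: probability_le1 _ F_meas.
apply: le_trans (leeD (ltW Hk0) (lexx _)) _.
  by rewrite -addeA -EFinD -splitr.
exact: F_meas.
Qed.

Lemma final (eps : R) : 0 < eps -> exists N : nat, forall d n : nat,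
    (N <= d)%N -> (N <= n)%N ->
    (`| christoffel ip e mu F d n h - mu ([set h] : set (borelType H)) | < eps%:E)%E.
Proof.
move=> e0; have e2 : 0 < eps / 2 by rewrite divr_gt0.
have [N0 HN] := @upper (eps / 2) e2.
exists N0 => d n dN nN.
have lo := lower d n; have up := HN d n dN nN.
have fh : mu ([set h] : set (borelType H)) \is a fin_num.
  rewrite ge0_fin_numE ?measure_ge0 //.
  by apply: le_lt_trans (probability_le1 _ h_meas) _; rewrite ltry.
move: lo up; rewrite -(fineK fh).
case: (christoffel ip e mu F d n h) => [r| |] //=.
  rewrite -EFinD !lee_fin lte_fin => lo up.
  rewrite ger0_norm ?subr_ge0 //; lra.
Qed.
End Main.

Theorem lemma4 (R : realType) (H : completeNormedModType R)
  (ip : H -> H -> R) (e : nat -> H)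
  (Hip : is_inner_product ip) (He : complete_orthonormal ip e)
  (F : set H) (HF : compact F)
  (mu : probability (borelType H) R) (muF : mu (F : set (borelType H)) = 1%E)
  (h : H) (hF : F h) :
  forall eps : R, 0 < eps -> exists N : nat, forall d n : nat,
    (N <= d)%N -> (N <= n)%N ->
    (`| christoffel ip e mu F d n h - mu ([set h] : set (borelType H)) | < eps%:E)%E.
Proof. exact: final. Qed.
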